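(* Let $n\ge4$, and let $x_1,\dots,x_{2n}$ and $z_2,z_4,\dots,z_{2n}$ be the elements of the boundary algebra $e_b\Lambda_{Q_F(n)}e_b$ defined below. Then for all $k\in[1,n]$, with indices modulo $2n$, $$\text{(I)}\quad z_{2k}z_{2k-2}=x_{2k+1}x_{2k+2}\cdots x_{2k+2(n-2)},\qquad \text{(II)}\quad x_{2k+1}x_{2k+2}z_{2k+2}=z_{2k}x_{2k-1}x_{2k}$$ hold in $e_b\Lambda_{Q_F(n)}e_b$.
   Context: Paths are composed from left to right. The dimer algebra of a dimer model with boundary $Q$ is $\Lambda_Q=\mathbb{C}Q/\langle\partial W\rangle$, where $\partial W$ consists of the relations $p_1\cdots p_k=q_1\cdots q_l$, one for each internal arrow $\alpha$ lying on the anticlockwise face boundary $\alpha p_1\cdots p_k$ and the clockwise face boundary $\alpha q_1\cdots q_l$; $e_b$ is the sum of the trivial paths at the boundary vertices. GL$_2$-dimer quiver: for a triangulation $T$ of a convex $n$-gon $P$ with vertices $v_1,\dots,v_n$ anticlockwise, subdivide each triangle of $T$ by the midlines into $4$ small triangles; put a black node at the midpoint of each half-side of each triangle and in each downward (middle) small triangle, and a white node in each of the three upward small triangles; join nodes of different colour lying in the same small triangle or in small triangles sharing a side. The quiver has a vertex for each component of the complement of this graph in $P$ and an arrow across each edge, oriented with the white endpoint on its left; white nodes give anticlockwise faces, black nodes of degree $\ge 2$ clockwise faces; 2-cycles of internal arrows are removed via the potential (reduced quiver). $Q_F(n)$: the reduced quiver for the fan triangulation with diagonals $v_1v_{k+2}$,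 $k=1,\dots,n-3$. It has boundary vertices $1,\dots,2n$ (anticlockwise, $2j-1$ being the component at corner $v_j$), internal vertices $i_1,\dots,i_{n-3}$, and arrows $x_k:k-1\to k$ ($k\in[1,2n]$, mod $2n$), $y_4:4\to2$, $y_{2n}:2n\to 2n-2$, $\alpha_0:2\to i_1$, $\alpha_k:i_k\to i_{k+1}$ ($1\le k<n-3$), $\alpha_{n-3}:i_{n-3}\to 2n$, $\beta_{k-1}:i_k\to 2k+2$ and $\gamma_k:2k+4\to i_k$ ($1\le k\le n-3$). The paths $z_{2k}:2k\to 2k-2$ are $z_{2k}:=\gamma_{k-2}\beta_{k-3}$ for $k=3,\dots,n-1$, $z_4:=y_4$, $z_2:=\alpha_0\alpha_1\cdots\alpha_{n-3}$, $z_{2n}:=y_{2n}$. *)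

(* Defs.v *)
From HB Require Import structures.
From mathcomp Require Import all_boot all_order all_algebra.
Set Implicit Arguments. Unset Strict Implicit. Unset Printing Implicit Defensive.
Import GRing.Theory.

(* Vertices: inl k = boundary vertex k (1 <= k <= 2n),                 *)
(*           inr k = internal vertex i_k (1 <= k <= n-3).              *)
(* Arrows:  X k = x_k, Y4 = y_4, Y2n = y_{2n}, Al k = alpha_k,         *)
(*          Be k = beta_k, Ga k = gamma_k.                             *)

Definition vertex := (nat + nat)%type.

Inductive arrow : Type :=
| X of nat | Y4 | Y2n | Al of nat | Be of nat | Ga of nat.

Lemma arrow_eq_dec : comparable arrow.
Proof. move=> a b; rewrite /decidable; decide equality; exact: eq_comparable. Qed.
HB.instance Definition _ := comparableMixin arrow_eq_dec.

Definition arrow_valid (n : nat) (a : arrow) : bool :=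
  match a with
  | X k => (1 <= k <= 2 * n)%N
  | Y4 | Y2n => true
  | Al k => (k <= n - 3)%N
  | Be k => (k <= n - 4)%N          (* beta_{k-1}, k in [1, n-3] *)
  | Ga k => (1 <= k <= n - 3)%N
  end.

Definition src (n : nat) (a : arrow) : vertex :=
  match a with
  | X k => inl (if k == 1%N then 2 * n else k.-1)%N
  | Y4 => inl 4%N
  | Y2n => inl (2 * n)%N
  | Al 0 => inl 2%N
  | Al k => inr k
  | Be k => inr k.+1
  | Ga k => inl (2 * k + 4)%N
  end.

Definition tgt (n : nat) (a : arrow) : vertex :=
  match a with
  | X k => inl k
  | Y4 => inl 2%N
  | Y2n => inl (2 * n - 2)%N
  | Al k => if k == (n - 3)%N then inl (2 * n)%N else inr k.+1
  | Be k => inl (2 * k + 4)%N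
  | Ga k => inr k
  end.

Fixpoint composable (n : nat) (w : seq arrow) : bool :=
  match w with
  | a :: ((b :: _) as w') => (tgt n a == src n b) && composable n w'
  | _ => true
  end.

(* non-trivial paths of Q_F(n) (paths composed left to right) *)
Definition is_path (n : nat) (w : seq arrow) : bool :=
  [&& w != [::], all (arrow_valid n) w & composable n w].

Definition internal_arrow (n : nat) (a : arrow) : bool :=
  arrow_valid n a && (if a is X _ then false else true).

(* The faces of Q_F(n) (as cyclic paths). *)
Definition face_corner1 (n : nat) : seq arrow :=
  X 1 :: X 2 :: map Al (iota 0 (n - 2)).
Definition face_corner (n j : nat) : seq arrow :=
  [:: X (2 * j - 1); X (2 * j); Ga (j - 2); Be (j - 3)].
Definition face_tri (k : nat) : seq arrow := [:: Al k; Be k; Ga k].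

Definition faces (n : nat) : seq (seq arrow) :=
  [:: face_corner1 n; [:: X 3; X 4; Y4]]
  ++ [seq face_corner n j | j <- iota 3 (n - 3)]
  ++ [:: [:: X (2 * n - 1); X (2 * n); Y2n]; [:: Al 0; Be 0; Y4]]
  ++ [seq face_tri k | k <- iota 1 (n - 4)]
  ++ [:: [:: Al (n - 3); Y2n; Ga (n - 3)]].

(* the relations of dW: for each internal arrow a lying on the two faces
   a p and a q, the relation p = q *)
Definition is_rel (n : nat) (p q : seq arrow) : Prop :=
  exists (a : arrow) (f g : seq arrow) (i j : nat),
    [/\ internal_arrow n a, f \in faces n, g \in faces n & f != g] /\
    rot i f = a :: p /\ rot j g = a :: q.

(* A generator  c * l (p - q) r  of the two-sided ideal <dW> in F Q *)
Record ideal_term (F : fieldType) := IdealTerm {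
  it_coef : F; it_l : seq arrow; it_p : seq arrow; it_q : seq arrow; it_r : seq arrow }.

(* Equality of two (non-trivial) paths u, v in Lambda = F Q / <dW>:
   u - v is an F-linear combination of elements l (p - q) r, l, r paths
   (non-composable products being 0 in F Q); compared coefficientwise on
   the basis of (non-trivial) paths of Q. *)
Definition lam_eq (F : fieldType) (n : nat) (u v : seq arrow) : Prop :=
  exists L : seq (ideal_term F),
    (forall i, (i < size L)%N -> let t := nth (IdealTerm 0%R [::] [::] [::] [::]) L i in is_rel n (it_p t) (it_q t)) /\
    forall w, is_path n w ->
      (((u == w)%:R - (v == w)%:R : F)
      = \sum_(t <- L) it_coef t *
          ((it_l t ++ it_p t ++ it_r t == w)%:R - (it_l t ++ it_q t ++ it_r t == w)%:R))%R.

(* indices modulo 2n, represented in [1, 2n] *)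
Definition modidx (n m : nat) : nat := ((m + 2 * n - 1) %% (2 * n)).+1.

Definition xm (n m : nat) : arrow := X (modidx n m).

Definition xs (n s len : nat) : seq arrow := [seq xm n (s + i) | i <- iota 0 len].

Definition zpath (n m : nat) : seq arrow :=
  let k := (modidx n m)./2 in
  if k == 1%N then map Al (iota 0 (n - 2))
  else if k == 2%N then [:: Y4]
  else if k == n then [:: Y2n]
  else [:: Ga (k - 2); Be (k - 3)].

(* Main.v *)
Require Import Defs.
From HB Require Import structures.
From mathcomp Require Import all_boot all_order all_algebra.
From mathcomp Require Import zify.
Set Implicit Arguments. Unset Strict Implicit. Unset Printing Implicit Defensive.
Import GRing.Theory.

Inductive req (n : nat) : seq arrow -> seq arrow -> Prop :=
| rstep l p q r : is_rel n p q -> req n (l ++ p ++ r) (l ++ q ++ r)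
| rrefl u : req n u u
| rsym u v : req n u v -> req n v u
| rtrans u v w : req n u v -> req n v w -> req n u w.

Definition negt (F : fieldType) (t : ideal_term F) :=
  IdealTerm (- it_coef t) (it_l t) (it_p t) (it_q t) (it_r t).

Lemma req_lam (F : fieldType) n u v : req n u v -> lam_eq F n u v.
Proof.
elim=> {u v}.
- move=> l p q r H; exists [:: IdealTerm 1 l p q r]; split.
    by case=> //.
  by move=> w _; rewrite big_seq1 /= mul1r.
- by move=> u; exists [::]; split=> // w _; rewrite big_nil subrr.
- move=> u v _ [L [HL HS]]; exists (map (@negt F) L); split.
    move=> i; rewrite size_map => Hi.
    by rewrite (nth_map (IdealTerm 0%R [::] [::] [::] [::])) //=; apply: HL.
  move=> w Hw; rewrite big_map.
  under eq_bigr do rewrite /= mulNr.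
  by rewrite sumrN -HS // opprB.
- move=> u v w _ [L1 [H1 S1]] _ [L2 [H2 S2]]; exists (L1 ++ L2); split.
    move=> i; rewrite size_cat nth_cat => Hi.
    case: ifP => Hi1; first exact: H1.
    apply: H2; lia.
  move=> x Hx; rewrite big_cat -S1 // -S2 //.
  by rewrite /= addrA subrK.
Qed.

Lemma rcong n l r u v : req n u v -> req n (l ++ u ++ r) (l ++ v ++ r).
Proof.
elim=> {u v}.
- move=> l0 p q r0 H; have := rstep (l ++ l0) (r0 ++ r) H; by rewrite !catA.
- by move=> u; apply: rrefl.
- by move=> u v _ H; apply: rsym.
- by move=> u v w _ H1 _ H2; apply: rtrans H2.
Qed.

Definition Gj (n j : nat) : arrow := if j == 0 then Y4 else Ga j.
Definition Bj (n j : nat) : arrow := if j == n - 3 then Y2n else Be j.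
Definition alist (a b : nat) : seq arrow := map Al (iota a b).
Definition xl (a b : nat) : seq arrow := map X (iota a b).

Lemma Gj_Ga n j : j != 0 -> Gj n j = Ga j.
Proof. by rewrite /Gj => /negbTE ->. Qed.
Lemma Bj_Be n j : j != n - 3 -> Bj n j = Be j.
Proof. by rewrite /Bj => /negbTE ->. Qed.

Lemma cons_neq (a b : arrow) s t : a != b -> a :: s != b :: t.
Proof. by move=> H; apply/eqP => -[] E; rewrite E eqxx in H. Qed.

Lemma face_g n j : 4 <= n -> j <= n - 3 -> [:: Al j; Bj n j; Gj n j] \in faces n.
Proof.
move=> hn hj; rewrite /faces !mem_cat.
have [->|j0] := eqVneq j 0.
  rewrite Bj_Be; last by apply/eqP; lia.
  by rewrite /Gj /= !inE eqxx !orbT.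
have [->|jn] := eqVneq j (n - 3).
  rewrite Gj_Ga; last by apply/eqP; lia.
  by rewrite /Bj eqxx !inE eqxx !orbT.
rewrite Gj_Ga // Bj_Be //.
have : face_tri j \in [seq face_tri k | k <- iota 1 (n - 4)].
  by apply: map_f; rewrite mem_iota; lia.
by rewrite /face_tri => ->; rewrite !orbT.
Qed.

Lemma rel_alpha n j : 4 <= n -> j <= n - 3 ->
  is_rel n (alist j.+1 (n - 3 - j) ++ [:: X 1; X 2] ++ alist 0 j) [:: Bj n j; Gj n j].
Proof.
move=> hn hj.
exists (Al j), (face_corner1 n), [:: Al j; Bj n j; Gj n j], (j + 2), 0.
split; [split|split].
- by rewrite /internal_arrow /=; lia.
- by rewrite /faces mem_cat inE eqxx.
- exact: face_g.
- by apply: cons_neq; apply/eqP; discriminate.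
- rewrite /face_corner1 (_ : n - 2 = j + (n - 3 - j).+1); last by lia.
  rewrite iotaD map_cat /= add0n.
  have -> : X 1 :: X 2 :: map Al (iota 0 j) ++ Al j :: map Al (iota j.+1 (n - 3 - j))
     = (X 1 :: X 2 :: map Al (iota 0 j)) ++ (Al j :: map Al (iota j.+1 (n - 3 - j))) by [].
  rewrite (_ : j + 2 = size (X 1 :: X 2 :: map Al (iota 0 j))); last by rewrite /= size_map size_iota; lia.
  by rewrite rot_size_cat.
- by [].
Qed.

Lemma rel_beta n j : 4 <= n -> j <= n - 4 ->
  is_rel n [:: Gj n j; Al j] [:: X (2 * j + 5); X (2 * j + 6); Gj n j.+1].
Proof.
move=> hn hj.
exists (Be j), [:: Al j; Bj n j; Gj n j], (face_corner n (j + 3)), 1, 3.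
rewrite Bj_Be; last by apply/eqP; lia.
split; [split|split].
- by rewrite /internal_arrow /=; lia.
- have := face_g hn (_ : j <= n - 3); rewrite Bj_Be; last by apply/eqP; lia.
  by apply; lia.
- rewrite /faces !mem_cat.
  have : face_corner n (j + 3) \in [seq face_corner n k | k <- iota 3 (n - 3)].
    by apply: map_f; rewrite mem_iota; lia.
  by move=> ->; rewrite !orbT.
- by apply: cons_neq; apply/eqP; discriminate.
- by [].
- rewrite /face_corner Gj_Ga //.
  have -> : 2 * (j + 3) - 1 = 2 * j + 5 by lia.
  have -> : 2 * (j + 3) = 2 * j + 6 by lia.
  have -> : j + 3 - 2 = j.+1 by lia.
  by have -> : j + 3 - 3 = j by lia.
Qed.

Lemma rel_y2n n : 4 <= n ->
  is_rel n [:: X (2 * n - 1); X (2 * n)] [:: Gj n (n - 3); Al (n - 3)].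
Proof.
move=> hn.
exists Y2n, [:: X (2 * n - 1); X (2 * n); Y2n], [:: Al (n - 3); Y2n; Ga (n - 3)], 2, 1.
rewrite Gj_Ga; last by apply/eqP; lia.
split; [split|split] => //.
- by rewrite /faces !mem_cat !inE eqxx !orbT.
- have := face_g hn (leqnn (n - 3)).
  by rewrite /Bj eqxx Gj_Ga //; apply/eqP; lia.
- by apply: cons_neq; apply/eqP; discriminate.
Qed.

Lemma rel_gamma n j : 4 <= n -> 1 <= j <= n - 3 ->
  is_rel n [:: Bj n j.-1; X (2 * j + 3); X (2 * j + 4)] [:: Al j; Bj n j].
Proof.
move=> hn hj.
exists (Gj n j), (face_corner n (j + 2)), [:: Al j; Bj n j; Gj n j], 2, 2.
rewrite Gj_Ga; last by apply/eqP; lia.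
rewrite (@Bj_Be n j.-1); last by apply/eqP; lia.
split; [split|split].
- by rewrite /internal_arrow /=; lia.
- rewrite /faces !mem_cat.
  have : face_corner n (j + 2) \in [seq face_corner n k | k <- iota 3 (n - 3)].
    by apply: map_f; rewrite mem_iota; lia.
  by move=> ->; rewrite !orbT.
- have := face_g hn (_ : j <= n - 3); rewrite Gj_Ga; last by apply/eqP; lia.
  by apply; lia.
- by apply: cons_neq; apply/eqP; discriminate.
- rewrite /face_corner.
  have -> : 2 * (j + 2) - 1 = 2 * j + 3 by lia.
  have -> : 2 * (j + 2) = 2 * j + 4 by lia.
  have -> : j + 2 - 2 = j by lia.
  by have -> : j + 2 - 3 = j.-1 by lia.
- by [].
Qed.

Lemma rel_y4 n : 4 <= n -> is_rel n [:: X 3; X 4] [:: Al 0; Bj n 0].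
Proof.
move=> hn.
exists Y4, [:: X 3; X 4; Y4], [:: Al 0; Be 0; Y4], 2, 2.
rewrite Bj_Be; last by apply/eqP; lia.
split; [split|split] => //.
- by rewrite /faces !mem_cat !inE eqxx !orbT.
- by rewrite /faces !mem_cat !inE eqxx !orbT.
- by apply: cons_neq; apply/eqP; discriminate.
Qed.

Lemma rel_req n p q : is_rel n p q -> req n p q.
Proof. by move=> H; have := rstep [::] [::] H; rewrite /= !cats0. Qed.

Lemma req_tc n l r u v w1 w2 :
  w1 = l ++ u ++ r -> req n u v -> req n (l ++ v ++ r) w2 -> req n w1 w2.
Proof. by move=> -> H1 H2; apply: rtrans H2; apply: rcong. Qed.

Lemma req_eq n w1 w2 : w1 = w2 -> req n w1 w2.
Proof. by move=> ->; apply: rrefl. Qed.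

Lemma alistS a b : alist a b.+1 = alist a b ++ [:: Al (a + b)].
Proof. by rewrite /alist -addn1 iotaD map_cat. Qed.

Lemma xlD a b c : xl a (b + c) = xl a b ++ xl (a + b) c.
Proof. by rewrite /xl iotaD map_cat. Qed.

Lemma pushA n j : 4 <= n -> j <= n - 3 ->
  req n (Gj n j :: alist j (n - 2 - j)) (xl (2 * j + 5) (2 * n - 2 * j - 4)).
Proof.
move=> hn hj.
have [m hm] : exists m, j + m = n - 3 by exists (n - 3 - j); lia.
elim: m j hj hm => [|m IH] j hj hm.
  rewrite addn0 in hm; subst j.
  rewrite (_ : n - 2 - (n - 3) = 1); last by lia.
  rewrite (_ : 2 * n - 2 * (n - 3) - 4 = 2); last by lia.
  rewrite /alist /xl /=.
  rewrite (_ : (2 * (n - 3) + 5) = 2 * n - 1); last by lia.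
  rewrite (_ : (2 * n - 1).+1 = 2 * n); last by lia.
  by apply: rsym; apply: rel_req; apply: rel_y2n.
apply: (@req_tc n [::] (alist j.+1 (n - 2 - j.+1)) [:: Gj n j; Al j]).
    rewrite /= (_ : n - 2 - j = (n - 2 - j.+1).+1); last by lia.
    by [].
  by apply: rel_req; apply: rel_beta => //; lia.
apply: (@req_tc n [:: X (2 * j + 5); X (2 * j + 6)] [::] (Gj n j.+1 :: alist j.+1 (n - 2 - j.+1))).
    by rewrite cats0.
  by apply: IH; lia.
apply: req_eq; rewrite cats0.
rewrite (_ : 2 * n - 2 * j - 4 = 2 + (2 * n - 2 * j.+1 - 4)); last by lia.
rewrite xlD (_ : 2 * j + 5 + 2 = 2 * j.+1 + 5); last by lia.
rewrite /xl /= (_ : (2 * j + 5).+1 = 2 * j + 6) //; lia.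
Qed.

Lemma pushB n j : 4 <= n -> j <= n - 3 ->
  req n (alist 0 j.+1 ++ [:: Bj n j]) (xl 3 (2 * j + 2)).
Proof.
move=> hn; elim: j => [|j IH] hj.
  by apply: rsym; apply: rel_req; apply: rel_y4.
apply: (@req_tc n (alist 0 j.+1) [::] [:: Al j.+1; Bj n j.+1]).
    by rewrite alistS -catA.
  apply: rsym; apply: rel_req.
  have := @rel_gamma n j.+1 hn; rewrite /=.
  rewrite (_ : 2 * j.+1 + 3 = 2 * j + 5); last by lia.
  rewrite (_ : 2 * j.+1 + 4 = 2 * j + 6); last by lia.
  by apply; lia.
apply: (@req_tc n [::] [:: X (2 * j + 5); X (2 * j + 6)] (alist 0 j.+1 ++ [:: Bj n j])).
    by rewrite /= -catA.
  by apply: IH; lia.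
apply: req_eq; rewrite /=.
rewrite (_ : 2 * j.+1 + 2 = (2 * j + 2) + 2); last by lia.
rewrite [in RHS]xlD (_ : 3 + (2 * j + 2) = 2 * j + 5); last by lia.
rewrite /xl /= (_ : (2 * j + 5).+1 = 2 * j + 6) //; lia.
Qed.

Section Mod.
Variable n : nat.
Hypothesis hn : 4 <= n.

Lemma modidx_id m : 1 <= m <= 2 * n -> modidx n m = m.
Proof.
move=> hm; rewrite /modidx (_ : m + 2 * n - 1 = (m - 1) + 2 * n); last by lia.
rewrite modnDr modn_small; lia.
Qed.

Lemma modidx_wrap m : 1 <= m <= 2 * n -> modidx n (m + 2 * n) = m.
Proof.
move=> hm; rewrite /modidx (_ : m + 2 * n + 2 * n - 1 = (m - 1) + 2 * n + 2 * n); last by lia.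
rewrite !modnDr modn_small; lia.
Qed.

Lemma modidx0 : modidx n 0 = 2 * n.
Proof. rewrite /modidx add0n modn_small; lia. Qed.

Lemma xm_id m : 1 <= m <= 2 * n -> xm n m = X m.
Proof. by move=> hm; rewrite /xm modidx_id. Qed.

Lemma xm_wrap m : 1 <= m <= 2 * n -> xm n (m + 2 * n) = X m.
Proof. by move=> hm; rewrite /xm modidx_wrap. Qed.

Lemma xs_id s len : 1 <= s -> s + len <= 2 * n + 1 -> xs n s len = xl s len.
Proof.
move=> h1 h2; rewrite /xs /xl.
have -> : iota s len = map (addn s) (iota 0 len) by rewrite -iotaDl addn0.
rewrite -map_comp.
apply/eq_in_map => i; rewrite mem_iota => hi /=.
rewrite xm_id //; lia.
Qed.

Lemma xs_wrap s len : 1 <= s -> s + len <= 2 * n + 1 -> xs n (s + 2 * n) len = xl s len.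
Proof.
move=> h1 h2; rewrite /xs /xl.
have -> : iota s len = map (addn s) (iota 0 len) by rewrite -iotaDl addn0.
rewrite -map_comp.
apply/eq_in_map => i; rewrite mem_iota => hi /=.
rewrite (_ : s + 2 * n + i = (s + i) + 2 * n); last by lia.
rewrite xm_wrap //; lia.
Qed.

Lemma xsD s a b : xs n s (a + b) = xs n s a ++ xs n (s + a) b.
Proof.
rewrite /xs iotaD map_cat add0n.
have -> : iota a b = map (addn a) (iota 0 b) by rewrite -iotaDl addn0.
rewrite -map_comp.
by congr (_ ++ _); apply: eq_map => i /=; rewrite addnA.
Qed.

Definition zz (k : nat) : seq arrow :=
  if k == 1 then alist 0 (n - 2) else if k == 2 then [:: Gj n 0]
  else if k == n then [:: Bj n (n - 3)] else [:: Gj n (k - 2); Bj n (k - 3)].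

Lemma zpath_zz k : 1 <= k <= n -> zpath n (2 * k) = zz k.
Proof.
move=> hk; rewrite /zpath modidx_id; last by lia.
rewrite mul2n doubleK /zz.
case: eqP => [//|h1]; case: eqP => [//|h2]; case: eqP => [_|h3].
  by rewrite /Bj eqxx.
rewrite Gj_Ga; last by apply/eqP; lia.
by rewrite Bj_Be //; apply/eqP; lia.
Qed.

Lemma zpath0 : zpath n 0 = zz n.
Proof.
rewrite -(zpath_zz (k := n)); last by lia.
by rewrite /zpath modidx0 modidx_id //; lia.
Qed.

Lemma zpath_wrap : zpath n (2 * n + 2) = zz 1.
Proof.
rewrite -(zpath_zz (k := 1)); last by lia.
rewrite /zpath (_ : 2 * n + 2 = 2 + 2 * n); last by lia.
by rewrite modidx_wrap ?modidx_id //; lia.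
Qed.

Lemma zz1 : zz 1 = alist 0 (n - 2).
Proof. by []. Qed.
Lemma zz2 : zz 2 = [:: Gj n 0].
Proof. by rewrite /zz. Qed.
Lemma zzn : zz n = [:: Bj n (n - 3)].
Proof. rewrite /zz ifN; last by apply/eqP; lia. rewrite ifN; last by apply/eqP; lia. by rewrite eqxx. Qed.
Lemma zzmid k : 3 <= k <= n - 1 -> zz k = [:: Gj n (k - 2); Bj n (k - 3)].
Proof.
move=> hk; rewrite /zz ifN; last by apply/eqP; lia.
rewrite ifN; last by apply/eqP; lia.
by rewrite ifN //; apply/eqP; lia.
Qed.

End Mod.

Section Cases.
Variable n : nat.
Hypothesis hn : 4 <= n.

Lemma caseI1 : req n (zz n 1 ++ zz n n) (xs n 3 (2 * (n - 2))).
Proof.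
rewrite zz1 zzn // (_ : n - 2 = (n - 3).+1); last by lia.
apply: rtrans (pushB hn (leqnn _)) _; apply: req_eq.
rewrite xs_id //; last by lia.
by congr xl; lia.
Qed.

Lemma caseI2 : req n (zz n 2 ++ zz n 1) (xs n 5 (2 * (n - 2))).
Proof.
rewrite zz1 zz2 /=.
have := pushA hn (_ : 0 <= n - 3); rewrite subn0 => H.
apply: rtrans (H _) _; first by [].
apply: req_eq; rewrite xs_id //; last by lia.
by congr xl; lia.
Qed.

Lemma caseImid j : j <= n - 4 ->
  req n (zz n (j + 3) ++ zz n (j + 2)) (xs n (2 * (j + 3) + 1) (2 * (n - 2))).
Proof.
move=> hj.
rewrite zzmid //; last by lia.
rewrite (_ : j + 3 - 2 = j.+1); last by lia.
rewrite (_ : j + 3 - 3 = j); last by lia.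
set Bo := if j is i.+1 then [:: Bj n i] else [::].
have Hz : zz n (j + 2) = Gj n j :: Bo.
  rewrite /Bo; case: j hj {Bo} => [|i] hi; first by rewrite add0n zz2.
  rewrite zzmid //; last by lia.
  rewrite (_ : i.+1 + 2 - 2 = i.+1); last by lia.
  by rewrite (_ : i.+1 + 2 - 3 = i); last by lia.
rewrite Hz.
apply: (@req_tc n [:: Gj n j.+1] Bo [:: Bj n j; Gj n j]); first by [].
  by apply: rsym; apply: rel_req; apply: rel_alpha => //; lia.
apply: (@req_tc n [::] ([:: X 1; X 2] ++ alist 0 j ++ Bo)
          (Gj n j.+1 :: alist j.+1 (n - 2 - j.+1))).
    by rewrite /= -!catA (_ : n - 3 - j = n - 2 - j.+1) //; lia.
  by apply: pushA => //; lia.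
have HB : req n (alist 0 j ++ Bo) (xl 3 (2 * j)).
  rewrite /Bo; case: j hj {Bo Hz} => [|i] hi; first by apply: req_eq.
  rewrite (_ : 2 * i.+1 = 2 * i + 2); last by lia.
  by apply: pushB => //; lia.
apply: (@req_tc n (xl (2 * j.+1 + 5) (2 * n - 2 * j.+1 - 4) ++ [:: X 1; X 2]) [::]
          (alist 0 j ++ Bo)).
    by rewrite cats0 /= -!catA.
  exact: HB.
apply: req_eq.
rewrite (_ : 2 * (n - 2) = (2 * n - 2 * j.+1 - 4) + (2 + 2 * j)); last by lia.
rewrite xsD xs_id; try lia.
rewrite (_ : 2 * (j + 3) + 1 + (2 * n - 2 * j.+1 - 4) = 1 + 2 * n); last by lia.
rewrite xs_wrap; try lia.
rewrite xlD cats0 -catA.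
by congr (xl _ _ ++ _); lia.
Qed.

Lemma caseIn : req n (zz n n ++ zz n (n - 1)) (xs n (2 * n + 1) (2 * (n - 2))).
Proof.
rewrite zzn // zzmid //; last by lia.
rewrite (_ : n - 1 - 2 = n - 3); last by lia.
rewrite (_ : n - 1 - 3 = n - 4); last by lia.
apply: (@req_tc n [::] [:: Bj n (n - 4)] [:: Bj n (n - 3); Gj n (n - 3)]); first by [].
  by apply: rsym; apply: rel_req; apply: rel_alpha.
rewrite subnn /= (_ : n - 3 = (n - 4).+1); last by lia.
apply: (@req_tc n [:: X 1; X 2] [::] (alist 0 (n - 4).+1 ++ [:: Bj n (n - 4)])).
    by rewrite cats0.
  by apply: pushB => //; lia.
apply: req_eq; rewrite cats0.
rewrite (_ : 2 * n + 1 = 1 + 2 * n); last by lia.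
rewrite xs_wrap; try lia.
rewrite (_ : 2 * (n - 2) = 2 + (2 * (n - 4) + 2)); last by lia.
by rewrite [in RHS]xlD.
Qed.

End Cases.

Section Cases2.
Variable n : nat.
Hypothesis hn : 4 <= n.

Lemma caseII1 : req n ([:: X 3; X 4] ++ zz n 2) (zz n 1 ++ [:: X 1; X 2]).
Proof.
rewrite zz1 zz2.
apply: (@req_tc n [::] [:: Gj n 0] [:: X 3; X 4]); first by [].
  exact: rel_req (rel_y4 hn).
apply: (@req_tc n [:: Al 0] [::] [:: Bj n 0; Gj n 0]); first by [].
  by apply: rsym; apply: rel_req; apply: rel_alpha => //; lia.
apply: req_eq; rewrite (_ : n - 2 = (n - 3).+1); last by lia.
by rewrite /= subn0 cats0.
Qed.

Lemma caseII2 : req n ([:: X 5; X 6] ++ zz n 3) (zz n 2 ++ [:: X 3; X 4]).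
Proof.
rewrite zz2 zzmid //; last by lia.
apply: (@req_tc n [::] [:: Bj n 0] [:: X (2 * 0 + 5); X (2 * 0 + 6); Gj n 0.+1]); first by [].
  by apply: rsym; apply: rel_req; apply: rel_beta => //; lia.
apply: (@req_tc n [:: Gj n 0] [::] [:: Al 0; Bj n 0]); first by [].
  by apply: rsym; apply: rel_req; apply: rel_y4.
by apply: req_eq.
Qed.

Lemma caseIImid j : 1 <= j <= n - 3 ->
  req n ([:: X (2 * j + 5); X (2 * j + 6)] ++ zz n (j + 3))
        (zz n (j + 2) ++ [:: X (2 * j + 3); X (2 * j + 4)]).
Proof.
move=> hj; apply: rsym.
rewrite [zz n (j + 2)]zzmid //; last by lia.
rewrite (_ : j + 2 - 2 = j); last by lia.
rewrite (_ : j + 2 - 3 = j.-1); last by lia.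
apply: (@req_tc n [:: Gj n j] [::] [:: Bj n j.-1; X (2 * j + 3); X (2 * j + 4)]); first by [].
  exact: rel_req (rel_gamma hn hj).
have [jn|jn] := eqVneq j (n - 3).
  rewrite (_ : j + 3 = n); last by lia.
  rewrite zzn //.
  apply: (@req_tc n [::] [:: Bj n j] [:: Gj n j; Al j]); first by [].
    by apply: rsym; apply: rel_req; have := rel_y2n hn; rewrite -jn; apply.
  apply: req_eq; rewrite cat0s jn.
  have -> : 2 * (n - 3) + 5 = 2 * n - 1 by lia.
  by have -> : 2 * (n - 3) + 6 = 2 * n by lia.
rewrite zzmid //; last by lia.
rewrite (_ : j + 3 - 2 = j.+1); last by lia.
rewrite (_ : j + 3 - 3 = j); last by lia.
apply: (@req_tc n [::] [:: Bj n j] [:: Gj n j; Al j]); first by [].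
  by apply: rel_req; apply: rel_beta => //; lia.
by apply: req_eq.
Qed.

Lemma caseIIn : req n ([:: X 1; X 2] ++ zz n 1) (zz n n ++ [:: X (2 * n - 1); X (2 * n)]).
Proof.
apply: rsym; rewrite zzn // zz1.
apply: (@req_tc n [:: Bj n (n - 3)] [::] [:: X (2 * n - 1); X (2 * n)]); first by rewrite cats0.
  exact: rel_req (rel_y2n hn).
apply: (@req_tc n [::] [:: Al (n - 3)] [:: Bj n (n - 3); Gj n (n - 3)]); first by [].
  by apply: rsym; apply: rel_req; apply: rel_alpha.
apply: req_eq; rewrite subnn cat0s.
rewrite (_ : n - 2 = (n - 3).+1); last by lia.
by rewrite alistS add0n -catA.
Qed.

End Cases2.

Theorem proposition3p5 (F : fieldType) (n : nat) (hn : (4 <= n)%N) :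
  forall k : nat, (1 <= k <= n)%N ->
    lam_eq F n (zpath n (2 * k) ++ zpath n (2 * k - 2)) (xs n (2 * k + 1) (2 * (n - 2)))
    /\ lam_eq F n ([:: xm n (2 * k + 1); xm n (2 * k + 2)] ++ zpath n (2 * k + 2))
                  (zpath n (2 * k) ++ [:: xm n (2 * k - 1); xm n (2 * k)]).
Proof.
move=> k hk; rewrite zpath_zz //.
have [k1|k1] := eqVneq k 1.
  subst k; split; apply: req_lam.
    rewrite (_ : 2 * 1 - 2 = 0) // zpath0 //; exact: caseI1.
  rewrite (_ : 2 * 1 + 2 = 2 * 2) // zpath_zz //; last by lia.
  rewrite !xm_id //; try lia.
  exact: caseII1.
have [k2|k2] := eqVneq k 2.
  subst k; split; apply: req_lam.
    rewrite (_ : 2 * 2 - 2 = 2 * 1) // zpath_zz //; last by lia.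
    exact: caseI2.
  rewrite (_ : 2 * 2 + 2 = 2 * 3) // zpath_zz //; last by lia.
  rewrite !xm_id //; try lia.
  exact: caseII2.
have [kn|kn] := eqVneq k n.
  subst k; split; apply: req_lam.
    rewrite (_ : 2 * n - 2 = 2 * (n - 1)); last by lia.
    rewrite zpath_zz //; last by lia.
    exact: caseIn.
  rewrite zpath_wrap //.
  rewrite (_ : 2 * n + 1 = 1 + 2 * n); last by lia.
  rewrite (_ : 2 * n + 2 = 2 + 2 * n); last by lia.
  rewrite !xm_wrap //; try lia.
  rewrite !xm_id //; try lia.
  exact: caseIIn.
have [j hj] : exists j, k = j + 3 by exists (k - 3); lia.
subst k; split; apply: req_lam.
  rewrite (_ : 2 * (j + 3) - 2 = 2 * (j + 2)); last by lia.
  rewrite zpath_zz //; last by lia.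
  by apply: caseImid => //; lia.
rewrite (_ : 2 * (j + 3) + 2 = 2 * (j.+1 + 3)); last by lia.
rewrite zpath_zz //; last by lia.
rewrite !xm_id //; try lia.
have := @caseIImid n hn j.+1 (_ : 1 <= j.+1 <= n - 3).
rewrite (_ : j.+1 + 2 = j + 3); last by lia.
rewrite (_ : 2 * j.+1 + 5 = 2 * (j + 3) + 1); last by lia.
rewrite (_ : 2 * j.+1 + 6 = 2 * (j.+1 + 3)); last by lia.
rewrite (_ : 2 * j.+1 + 3 = 2 * (j + 3) - 1); last by lia.
rewrite (_ : 2 * j.+1 + 4 = 2 * (j + 3)); last by lia.
by apply; lia.
Qed.
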